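(* Let $n\ge1$, $s\in\{1,\dots,n\}$ and let $C\in\mathbb{R}^{n\times n}$ be symmetric positive definite. Let $x^*$ be an optimal solution of the problem defining $\hat z(\lambda_{\min}(C))$, and let $\lambda^*=(\lambda^*_1\ge\dots\ge\lambda^*_n)\in\mathbb{R}^n_+$ be the eigenvalues of $M_{\lambda_{\min}(C)}(x^* )$ in nonincreasing order (with $\lambda^*_{n+1}:=0$ if $s=n$). Then $$\hat z^D(\lambda_{\min}(C))-\hat z(\lambda_{\min}(C))\ge\Theta^{lb}:=\Big(\frac{1}{\lambda^*_{s+1}+\lambda_{\min}(C)}-\frac{1}{\lambda^*_s+\lambda_{\min}(C)}\Big)\sum_{i=s+1}^n\lambda^*_i\ge0.$$
   Context: $\lambda_{\min}(C)$ is the smallest eigenvalue of $C$. For $0\le t\le\lambda_{\min}(C)$ let $A(t)\in\mathbb{R}^{n\times n}$ be a Cholesky factor of $C-tI$ (so $C-tI=A(t)^\top A(t)$), with $i$-th column $a_i(t)$, and for $x\in[0,1]^n$ let $M_t(x)=\sum_i x_i a_i(t)a_i(t)^\top$. For a positive semidefinite $X$ with eigenvalues $\lambda_1(X)\ge\dots\ge\lambda_n(X)$, $\Phi_s(X;t)=\sum_{i=1}^s\log(\lambda_i(X)+t)$ (natural log); $\widehat{\Phi}_s(\cdot\,;t)$ is its concave envelope on the cone of $n\times n$ positive semidefinite matrices (pointwise infimum of all concave functions there that are $\ge\Phi_s(\cdot\,;t)$). $\hat z(t)=\max\{\widehat{\Phi}_s(M_t(x);t) : x\in[0,1]^n,\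 \sum_i x_i=s\}$, and for $t>0$, $\hat z^D(t)=\max\{\log\det(M_t(x)+tI) : x\in[0,1]^n,\ \sum_i x_i=s\}-(n-s)\log(t)$. *)

(* Defs.v *)
From HB Require Import structures.
From mathcomp Require Import all_boot all_order all_algebra.
From mathcomp Require Import boolp classical_sets reals ereal exp.
Set Implicit Arguments. Unset Strict Implicit. Unset Printing Implicit Defensive.
Import Order.TTheory GRing.Theory Num.Theory.
Local Open Scope ring_scope.

Section Defs.
Variables (R : realType) (n : nat).

Definition psd (X : 'M[R]_n) : Prop :=
  X^T = X /\ forall v : 'cV[R]_n, 0 <= (v^T *m X *m v) 0 0.
Definition pd (X : 'M[R]_n) : Prop :=
  X^T = X /\ forall v : 'cV[R]_n, v != 0 -> 0 < (v^T *m X *m v) 0 0.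

Definition spectrum (X : 'M[R]_n) (l : seq R) : Prop :=
  [/\ size l = n, sorted (fun a b => b <= a) l &
      char_poly X = \prod_(a <- l) ('X - a%:P)].

(* the eigenvalue list lambda_1(X) >= ... >= lambda_n(X) (0-indexed as a seq);
   arbitrary (nseq n 0) if X has no real spectrum *)
Definition eigvals (X : 'M[R]_n) : seq R :=
  match pselect (exists l, spectrum X l) with
  | left h => projT1 (cid h)
  | right _ => nseq n 0
  end.

Definition lambda_min (C : 'M[R]_n) : R := last 0 (eigvals C).

Definition Phi (s : nat) (t : R) (X : 'M[R]_n) : R :=
  \sum_(i < s) ln (nth 0 (eigvals X) i + t).

Definition concave_on_psd (g : 'M[R]_n -> R) : Prop :=
  forall X Y (a : R), psd X -> psd Y -> 0 <= a <= 1 ->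
    a * g X + (1 - a) * g Y <= g (a *: X + (1 - a) *: Y).

Definition Phi_hat (s : nat) (t : R) (X : 'M[R]_n) : \bar R :=
  ereal_inf [set (g X)%:E | g in
    [set g | concave_on_psd g /\ forall Y, psd Y -> Phi s t Y <= g Y]].

Definition cholesky_factor (C : 'M[R]_n) (t : R) (A : 'M[R]_n) : Prop :=
  [/\ C - t%:M = A^T *m A,
      forall i j : 'I_n, (j < i)%N -> A i j = 0 &
      forall i : 'I_n, 0 <= A i i].

Definition Mx (A : 'M[R]_n) (x : 'I_n -> R) : 'M[R]_n :=
  \sum_(i < n) x i *: (col i A *m (col i A)^T).

Definition feasible (s : nat) (x : 'I_n -> R) : Prop :=
  (forall i, 0 <= x i <= 1) /\ \sum_(i < n) x i = s%:R.

Definition z_hat (A : 'M[R]_n) (s : nat) (t : R) : \bar R :=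
  ereal_sup [set Phi_hat s t (Mx A x) | x in feasible s].

Definition z_hat_D (A : 'M[R]_n) (s : nat) (t : R) : \bar R :=
  (ereal_sup [set (ln (\det (Mx A x + t%:M)))%:E | x in feasible s]
   - ((n - s)%:R * ln t)%:E)%E.

End Defs.

(* Main.v *)
Require Import Defs.
From HB Require Import structures.
From mathcomp Require Import all_boot all_order all_algebra.
From mathcomp Require Import boolp classical_sets reals ereal exp.
From mathcomp Require Import fingroup perm complex spectral sesquilinear.
From mathcomp Require Import ring lra zify.
Import Order.TTheory GRing.Theory Num.Theory.
Local Open Scope ring_scope.
Set Implicit Arguments. Unset Strict Implicit. Unset Printing Implicit Defensive.

Section Rearr.
Variable R : realFieldType.

Lemma abel_sum (m f : nat -> R) (N : nat) :
  \sum_(j < N.+1) m j * f j =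
  \sum_(k < N) (m k - m k.+1) * (\sum_(j < k.+1) f j) + m N * \sum_(j < N.+1) f j.
Proof.
elim: N => [|N IH]; first by rewrite big_ord0 add0r !big_ord1.
rewrite big_ord_recr /= IH [in RHS]big_ord_recr /=.
rewrite [\sum_(j < N.+2) f j]big_ord_recr /=.
set S := \sum_(j < N.+1) f j; set T := \sum_(k < N) _; ring.
Qed.

Lemma threshold (N K : nat) (g r : nat -> R) :
  (K <= N)%N ->
  (forall i j, (i <= j)%N -> (j < N)%N -> g i <= g j) ->
  (forall i, (i < N)%N -> 0 <= r i <= 1) ->
  \sum_(i < N) r i = K%:R ->
  \sum_(i < K) g i <= \sum_(i < N) g i * r i.
Proof.
move=> KN gmono rb rs.
case: N KN gmono rb rs => [|N] KN gmono rb rs.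
  by move: KN; rewrite leqn0 => /eqP ->; rewrite !big_ord0.
pose c := if K is K'.+1 then g K' else g 0%N.
pose b (i : nat) : R := (i < K)%N%:R.
have sb : \sum_(i < N.+1) b i = K%:R.
  have -> : K%:R = \sum_(i < K) (1 : R) by rewrite sumr_const card_ord.
  rewrite (big_ord_widen _ (fun _ => (1:R)) KN) [RHS]big_mkcond /=; apply: eq_bigr => i _.
  by rewrite /b; case: ifP.
have sg : \sum_(i < K) g i = \sum_(i < N.+1) g i * b i.
  rewrite (big_ord_widen _ g KN) big_mkcond /=; apply: eq_bigr => i _.
  by rewrite /b; case: ifP => _; rewrite ?mulr1 ?mulr0.
have cle : forall i, (i < K)%N -> g i <= c.
  move=> i iK; rewrite /c; case HK: K iK => [//|K'] iK; apply: gmono => //.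
  by move: KN; rewrite HK.
have cge : forall i, (K <= i)%N -> (i < N.+1)%N -> c <= g i.
  move=> i iK iN; rewrite /c; case HK: K iK => [|K'] iK; apply: gmono => //.
  by apply: ltnW.
have key : 0 <= \sum_(i < N.+1) (g i - c) * (r i - b i).
  apply: sumr_ge0 => i _; have /andP[r0 r1] := rb i (ltn_ord i).
  rewrite /b; case: (ltnP i K) => iK /=.
    by apply: mulr_le0; rewrite subr_le0 // cle.
  rewrite subr0; apply: mulr_ge0 => //; rewrite subr_ge0 cge //.
have E : \sum_(i < N.+1) (g i - c) * (r i - b i) =
   \sum_(i < N.+1) g i * r i - \sum_(i < N.+1) g i * b i
   - c * (\sum_(i < N.+1) r i - \sum_(i < N.+1) b i).
  rewrite mulrBr !mulr_sumr -!sumrB; apply: eq_bigr => i _; ring.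
by rewrite E rs sb subrr mulr0 subr0 subr_ge0 in key; rewrite sg.
Qed.

Lemma rearrangement (n : nat) (g m : nat -> R) (q : nat -> nat -> R) :
  (forall i j, (i <= j)%N -> (j < n)%N -> g i <= g j) ->
  (forall i j, (i <= j)%N -> (j < n)%N -> m j <= m i) ->
  (forall i j, (i < n)%N -> (j < n)%N -> 0 <= q i j) ->
  (forall i, (i < n)%N -> \sum_(j < n) q i j = 1) ->
  (forall j, (j < n)%N -> \sum_(i < n) q i j = 1) ->
  \sum_(i < n) g i * m i <= \sum_(i < n) \sum_(j < n) g i * q i j * m j.
Proof.
move=> gm mm q0 qr qc.
case: n gm mm q0 qr qc => [|N] gm mm q0 qr qc; first by rewrite !big_ord0.
rewrite exchange_big /=.
have -> : \sum_(j < N.+1) \sum_(i < N.+1) g i * q i j * m j =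
          \sum_(j < N.+1) m j * (\sum_(i < N.+1) g i * q i j).
  apply: eq_bigr => j _; rewrite mulr_sumr; apply: eq_bigr => i _; ring.
rewrite (abel_sum m (fun j => \sum_(i < N.+1) g i * q i j)).
have -> : \sum_(i < N.+1) g i * m i = \sum_(i < N.+1) m i * g i.
  by apply: eq_bigr => i _; rewrite mulrC.
rewrite (abel_sum m g).
have -> : \sum_(j < N.+1) \sum_(i < N.+1) g i * q i j = \sum_(j < N.+1) g j.
  rewrite exchange_big /=; apply: eq_bigr => i _.
  by rewrite -mulr_sumr qr ?mulr1.
apply: lerD => //; apply: ler_sum => k _.
apply: ler_wpM2l; first by rewrite subr_ge0; apply: mm => //; rewrite ltnS.
rewrite exchange_big /=.
have -> : \sum_(i < N.+1) \sum_(i0 < k.+1) g i * q i i0 =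
   \sum_(i < N.+1) g i * (\sum_(j < k.+1) q i j).
  by apply: eq_bigr => i _; rewrite mulr_sumr.
apply: (@threshold N.+1 k.+1 g (fun i => \sum_(j < k.+1) q i j)) => //.
- by rewrite ltnS ltnW.
- move=> i; rewrite ltnS => iN; apply/andP; split.
    apply: sumr_ge0 => j _; apply: q0 => //.
    by have := ltn_ord j; have := ltn_ord k; lia.
  rewrite -(qr i) ?ltnS //.
  rewrite (big_ord_widen _ (fun j => q i j) (leqW (ltn_ord k))) [X in X <= _]big_mkcond /=.
  apply: ler_sum => j _; case: ifP => // _; apply: q0 => //.
- rewrite exchange_big /= (eq_bigr (fun _ => 1)); last first.
    by move=> j _; apply: qc; have := ltn_ord j; have := ltn_ord k; lia.
  by rewrite sumr_const card_ord.
Qed.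

Lemma rearr_ord (n : nat) (g m : nat -> R) (Q : 'I_n -> 'I_n -> R) :
  (forall i j, (i <= j)%N -> (j < n)%N -> g i <= g j) ->
  (forall i j, (i <= j)%N -> (j < n)%N -> m j <= m i) ->
  (forall i j, 0 <= Q i j) ->
  (forall i, \sum_j Q i j = 1) ->
  (forall j, \sum_i Q i j = 1) ->
  \sum_(i < n) g i * m i <= \sum_(i < n) \sum_(j < n) g i * Q i j * m j.
Proof.
case: n Q => [|N] Q gm mm Q0 Qr Qc; first by rewrite !big_ord0.
pose q (i j : nat) := Q (inord i) (inord j).
have -> : \sum_(i < N.+1) \sum_(j < N.+1) g i * Q i j * m j =
          \sum_(i < N.+1) \sum_(j < N.+1) g i * q i j * m j.
  by apply: eq_bigr => i _; apply: eq_bigr => j _; rewrite /q !inord_val.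
apply: rearrangement => //.
- by move=> i j _ _; apply: Q0.
- move=> i iN; rewrite -(Qr (inord i)); apply: eq_bigr => j _; by rewrite /q inord_val.
- move=> j jN; rewrite -(Qc (inord j)); apply: eq_bigr => i _; by rewrite /q inord_val.
Qed.
End Rearr.

Section Scalar.
Variable R : realType.

Lemma ln_tangent (a mu t : R) : 0 < a + t -> 0 < mu + t ->
  ln (mu + t) <= ln (a + t) + (mu - a) * (a + t)^-1.
Proof.
move=> ha hm.
have -> : mu + t = (a + t) * (1 + (mu - a) * (a + t)^-1).
  by field; rewrite gt_eqF.
rewrite lnM ?posrE //; last first.
  have -> : 1 + (mu - a) * (a + t)^-1 = (mu + t) / (a + t) by field; rewrite gt_eqF.
  by rewrite divr_gt0.
rewrite lerD2l le_ln1Dx //.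
have -> : (mu - a) * (a + t)^-1 = (mu + t) / (a + t) - 1 by field; rewrite gt_eqF.
by rewrite ltrBrDr addrC addrN divr_gt0.
Qed.

Lemma ln_lower (x t : R) : 0 < t -> 0 <= x -> x / (x + t) <= ln (x + t) - ln t.
Proof.
move=> ht hx; have hxt : 0 < x + t by rewrite ltr_wpDl.
have := @le_ln1Dx R (t / (x + t) - 1).
have -> : 1 + (t / (x + t) - 1) = t / (x + t) by ring.
have -> : ln (t / (x + t)) = - (ln (x + t) - ln t).
  by rewrite ln_div ?posrE // opprB.
have -> : t / (x + t) - 1 = - (x / (x + t)) by field; rewrite gt_eqF.
rewrite lerN2 => H; apply: H.
rewrite ltrNl opprK ltr_pdivrMr // mul1r; lra.
Qed.

Lemma ln_prod (n : nat) (F : 'I_n -> R) : (forall i, 0 < F i) ->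
  ln (\prod_(i < n) F i) = \sum_(i < n) ln (F i).
Proof.
elim: n F => [|n IH] F hF; first by rewrite !big_ord0 ln1.
rewrite !big_ord_recr /= lnM ?posrE //; last by apply: prodr_gt0.
by rewrite IH.
Qed.
End Scalar.

Lemma det_conj_gen (F : comUnitRingType) n (Q A P : 'M[F]_n) : Q *m P = 1%:M ->
  \det (Q *m A *m P) = \det A.
Proof.
move=> QP; rewrite !det_mulmx mulrC mulrA [\det P * _]mulrC -det_mulmx QP det1.
by rewrite mul1r.
Qed.

Lemma det_conj (F : fieldType) n (P A : 'M[F]_n) : P \in unitmx ->
  \det (invmx P *m A *m P) = \det A.
Proof. by move=> Pu; apply: det_conj_gen; rewrite mulVmx. Qed.

Lemma char_poly_conj (F : fieldType) n (P A : 'M[F]_n) : P \in unitmx ->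
  char_poly (invmx P *m A *m P) = char_poly A.
Proof.
move=> Pu; rewrite /char_poly.
set Q := map_mx polyC (invmx P); set P' := map_mx polyC P.
have QP : Q *m P' = 1%:M by rewrite -map_mxM mulVmx // map_mx1.
rewrite -(det_conj_gen (char_poly_mx A) QP); congr (\det _).
rewrite /char_poly_mx !map_mxM mulmxBr mulmxBl; congr (_ - _).
by rewrite mul_mx_scalar -scalemxAl QP scalemx1.
Qed.

Section Spec.
Local Open Scope sesquilinear_scope.
Variable R : realType.
Local Notation C := (R[i]).
Local Notation toC := (real_complex R).
Local Notation ReC := (@complex.Re R).

Definition mC n (Y : 'M[R]_n) : 'M[C]_n := map_mx toC Y.

Lemma mC_tC n (Y : 'M[R]_n) : ((mC Y)^t* ) = mC (Y^T).
Proof. by apply/matrixP => i j; rewrite !mxE /=; exact: conjc_real. Qed.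

Lemma spec1 n (Y : 'M[R]_n) : Y^T = Y ->
  exists V : 'M[C]_n, exists d : 'I_n -> R,
    V \is unitarymx /\ mC Y = V^t* *m diag_mx (\row_i (d i)%:C%C) *m V.
Proof.
move=> sY.
have herm : mC Y \is hermsymmx.
  by apply/is_hermitianmxP; rewrite expr0 scale1r mC_tC sY.
have /orthomx_spectralP E := hermitian_normalmx herm.
have Pu := spectral_unitarymx (mC Y).
exists (spectralmx (mC Y)), (fun i => ReC (spectral_diag (mC Y) 0 i)); split => //.
have Er : spectral_diag (mC Y) = \row_i (ReC (spectral_diag (mC Y) 0 i))%:C%C.
  apply/rowP => i; rewrite mxE.
  have /mxOverP /(_ 0 i) := hermitian_spectral_diag_real herm.
  by move/RRe_real.
rewrite -Er -invmx_unitary //; exact: E.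
Qed.

Definition geR (a b : R) := b <= a.

Lemma geR_total : total geR.
Proof. by move=> a b; rewrite /geR orbC le_total. Qed.
Lemma geR_trans : transitive geR.
Proof. by move=> x y z h1 h2; exact: (le_trans h2 h1). Qed.
Lemma geR_anti : antisymmetric geR.
Proof. by move=> x y /andP[h1 h2]; apply/le_anti; rewrite /geR in h1 h2; rewrite h1 h2. Qed.

Lemma spec2 n (Y : 'M[R]_n) : Y^T = Y ->
  spectrum Y (eigvals Y) /\
  exists V : 'M[C]_n, exists p : 'S_n,
    V \is unitarymx /\
    mC Y = V^t* *m diag_mx (\row_i (nth 0 (eigvals Y) (p i))%:C%C) *m V.
Proof.
move=> sY; have [V [d [Vu E]]] := spec1 sY.
set l := sort geR [seq d i | i <- enum 'I_n].
have cp : char_poly Y = \prod_(a <- l) ('X - a%:P).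
  apply: (@map_poly_inj _ _ toC); rewrite map_char_poly.
  have -> : map_mx toC Y = mC Y by [].
  rewrite E -invmx_unitary // char_poly_conj ?unitarymx_unit //.
  rewrite char_poly_trig ?diag_mx_is_trig // rmorph_prod.
  rewrite (perm_big _ (permEl (perm_sort _ _))) /= big_map big_enum /=.
  apply: eq_bigr => i _; rewrite map_polyXsubC !mxE eqxx mulr1n.
  done.
have spl : spectrum Y l.
  split => //; first by rewrite size_sort size_map size_enum_ord.
  exact: (sort_sorted geR_total).
have El : eigvals Y = l.
  rewrite /eigvals; case: pselect => [h|nh]; last by exfalso; apply: nh; exists l.
  case: (cid h) => l' [sz' so' cp'] /=.
  apply: (sorted_eq geR_trans geR_anti) => //; first by case: spl.
  by apply: prod_XsubC_eq; rewrite -cp' -cp.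
rewrite El; split => //.
have szl : size l == n by case: spl => ->.
pose t := Tuple szl.
have pe : perm_eq [tuple d i | i < n] t.
  by rewrite /= perm_sym (permEl (perm_sort _ _)).
have [p Ep] := tuple_permP pe.
exists V, p; split; first exact: Vu.
have Er : \row_i (d i)%:C%C = \row_i (nth 0 l (p i))%:C%C :> 'rV[C]_n.
  apply/rowP => i; rewrite !mxE.
  have := congr1 (fun u : n.-tuple R => tnth u i) (val_inj Ep).
  rewrite !tnth_mktuple => ->; by rewrite (tnth_nth 0).
by rewrite E Er.
Qed.

Lemma vvT_gt0 n (v : 'rV[R]_n) : v != 0 -> 0 < (v *m v^T) 0 0.
Proof.
move=> vn0; have [j vj] : exists j, v 0 j != 0.
  apply/existsP; apply: contraR vn0 => /existsPn h; apply/eqP/rowP => j.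
  by rewrite mxE; apply/eqP; have := h j; rewrite negbK.
rewrite mxE (bigD1 j) //= mxE; apply: ltr_pwDl.
  by rewrite -expr2 lt0r sqrf_eq0 vj sqr_ge0.
by apply: sumr_ge0 => i _; rewrite mxE -expr2 sqr_ge0.
Qed.

Lemma eig_vec n (Y : 'M[R]_n) l a : spectrum Y l -> a \in l ->
  exists2 v : 'rV[R]_n, v *m Y = a *: v & v != 0.
Proof.
case=> _ _ cp al; apply/eigenvalueP; rewrite eigenvalue_root_char cp.
by rewrite root_prod_XsubC.
Qed.

Lemma quad_eig n (Y : 'M[R]_n) (v : 'rV[R]_n) a : v *m Y = a *: v ->
  ((v^T)^T *m Y *m v^T) 0 0 = a * (v *m v^T) 0 0.
Proof. by move=> E; rewrite trmxK E -scalemxAl mxE. Qed.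

Lemma eig_nonneg n (Y : 'M[R]_n) l a : psd Y -> spectrum Y l -> a \in l -> 0 <= a.
Proof.
move=> [_ hY] sp al; have [v E vn0] := eig_vec sp al.
have := hY v^T; rewrite (quad_eig E) => h.
by rewrite -(pmulr_lge0 _ (vvT_gt0 vn0)).
Qed.

Lemma eig_pos n (Y : 'M[R]_n) l a : pd Y -> spectrum Y l -> a \in l -> 0 < a.
Proof.
move=> [_ hY] sp al; have [v E vn0] := eig_vec sp al.
have := hY v^T; rewrite trmx_eq0 => /(_ vn0); rewrite (quad_eig E) => h.
by rewrite -(pmulr_lgt0 _ (vvT_gt0 vn0)).
Qed.

Local Notation ImC := (@complex.Im R).
Definition qc (z : C) : R := (ReC z)^+2 + (ImC z)^+2.

Lemma qc_ge0 z : 0 <= qc z.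
Proof. by rewrite /qc addr_ge0 // sqr_ge0. Qed.

Lemma mul_conj_qc (z : C) : z * Num.conj z = (qc z)%:C%C.
Proof.
case: z => a b; rewrite /qc /=; apply/eqP; rewrite eq_complex /=; apply/andP; split;
  apply/eqP; ring.
Qed.

Lemma tr_form n (V U : 'M[C]_n) (a b : 'I_n -> R) :
  \tr (V^t* *m diag_mx (\row_i (a i)%:C%C) *m V *m
        (U^t* *m diag_mx (\row_i (b i)%:C%C) *m U))
  = (\sum_i \sum_j a i * qc ((V *m U^t* ) i j) * b j)%:C%C.
Proof.
set Da := diag_mx _; set Db := diag_mx _.
have -> : V^t* *m Da *m V *m (U^t* *m Db *m U) =
          V^t* *m (Da *m V *m U^t* *m Db *m U).
  by rewrite !mulmxA.
rewrite mxtrace_mulC.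
have -> : Da *m V *m U^t* *m Db *m U *m V^t* =
          Da *m (V *m U^t* ) *m Db *m (V *m U^t* )^t*.
  by rewrite trmx_mul map_mxM trmxCK !mulmxA.
set P := V *m U^t*; clearbody P; rewrite /Da /Db mul_diag_mx.
rewrite /mxtrace rmorph_sum; apply: eq_bigr => i _.
rewrite mxE rmorph_sum; apply: eq_bigr => j _.
rewrite mul_mx_diag !mxE /=.
rewrite !rmorphM /= -mul_conj_qc; ring.
Qed.

Lemma qc_row n (P : 'M[C]_n) i : P \is unitarymx -> \sum_j qc (P i j) = 1.
Proof.
move=> /unitarymxP /matrixP /(_ i i); rewrite !mxE eqxx mulr1n => h.
apply: (@complexI R); rewrite rmorph_sum rmorph1 /= -h; apply: eq_bigr => j _.
by rewrite -mul_conj_qc !mxE.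
Qed.

Lemma qc_col n (P : 'M[C]_n) j : P \is unitarymx -> \sum_i qc (P i j) = 1.
Proof.
rewrite -trmxC_unitary => /unitarymxP; rewrite trmxCK => /matrixP /(_ j j).
rewrite !mxE eqxx mulr1n => h.
apply: (@complexI R); rewrite rmorph_sum rmorph1 /= -h; apply: eq_bigr => i _.
by rewrite -mul_conj_qc !mxE mulrC.
Qed.

Lemma qc_id n (i j : 'I_n) : qc ((1%:M : 'M[C]_n) i j) = (i == j)%:R.
Proof. by rewrite mxE; case: eqP => _; rewrite /qc /= ?expr1n ?expr0n /= ?addr0. Qed.
End Spec.

Section Major.
Local Open Scope sesquilinear_scope.
Variable R : realType.
Local Notation C := (R[i]).
Local Notation ReC := (@complex.Re R).
Variables (n s : nat) (t : R) (lam : seq R) (V : 'M[C]_n) (p : 'S_n).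
Hypotheses (ht : 0 < t) (hs1 : (1 <= s)%N) (hsn : (s <= n)%N)
  (szl : size lam = n) (sol : sorted (@geR R) lam)
  (lam0 : forall a, a \in lam -> 0 <= a) (Vu : V \is unitarymx).

Definition gam (i : nat) : R :=
  if (i < s)%N then (nth 0 lam i + t)^-1 else (nth 0 lam s.-1 + t)^-1.
Definition cst : R := \sum_(i < s) (ln (nth 0 lam i + t) - nth 0 lam i * gam i).
Definition Gm : 'M[C]_n := V^t* *m diag_mx (\row_i (gam (p i))%:C%C) *m V.
Definition gfun (Y : 'M[R]_n) : R := cst + ReC (\tr (Gm *m mC Y)).

Lemma nth_lam0 k : 0 <= nth 0 lam k.
Proof.
case: (ltnP k (size lam)) => hk; first by apply: lam0; rewrite mem_nth.
by rewrite nth_default.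
Qed.

Lemma lam_mono i j : (i <= j)%N -> (j < n)%N -> nth 0 lam j <= nth 0 lam i.
Proof.
move=> ij jn; have := @sorted_leq_nth _ _ (@geR_trans R) (fun x => lexx x) 0 lam sol i j.
rewrite !inE szl => h; apply: h => //; exact: leq_ltn_trans jn.
Qed.

Lemma gam_pos i : 0 < gam i.
Proof. by rewrite /gam; case: ifP => _; rewrite invr_gt0 ltr_wpDl // nth_lam0. Qed.

Lemma gam_mono i j : (i <= j)%N -> (j < n)%N -> gam i <= gam j.
Proof.
move=> ij jn; rewrite /gam.
have hp k : 0 < nth 0 lam k + t by rewrite ltr_wpDl // nth_lam0.
case: (ltnP i s) => hi; case: (ltnP j s) => hj.
- by rewrite lef_pV2 ?posrE // lerD2r lam_mono.
- by rewrite lef_pV2 ?posrE // lerD2r; apply: lam_mono; lia.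
- by lia.
- by [].
Qed.

Lemma gfun_lin (a b : R) X Y :
  gfun (a *: X + b *: Y) = cst + a * ReC (\tr (Gm *m mC X)) + b * ReC (\tr (Gm *m mC Y)).
Proof.
rewrite /gfun /mC map_mxD !map_mxZ mulmxDr -!scalemxAr mxtraceD !mxtraceZ.
rewrite -addrA; congr (_ + _).
set u := \tr _; set v := \tr _.
by case: u => ??; case: v => ??; rewrite /= !mul0r !subr0.
Qed.

Lemma gfun_concave : concave_on_psd gfun.
Proof.
move=> X Y a _ _ _; rewrite gfun_lin /gfun.
rewrite le_eqVlt; apply/orP; left; apply/eqP; ring.
Qed.


Lemma gfun_at (M : 'M[R]_n) :
  mC M = V^t* *m diag_mx (\row_i (nth 0 lam (p i))%:C%C) *m V ->
  gfun M = cst + \sum_(i < n) gam i * nth 0 lam i.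
Proof.
move=> E; rewrite /gfun E /Gm tr_form (unitarymxP Vu) /=; congr (_ + _).
rewrite [RHS](reindex_inj (@perm_inj _ p)); apply: eq_bigr => i _.
rewrite (bigD1 i) //= qc_id eqxx mulr1 big1 ?addr0 // => j ji.
by rewrite qc_id eq_sym (negbTE ji) mulr0 mul0r.
Qed.

Lemma gfun_major (Y : 'M[R]_n) : psd Y -> Phi s t Y <= gfun Y.
Proof.
move=> pY; have sY : Y^T = Y by case: pY.
have [spY [U [r [Uu EY]]]] := spec2 sY.
set mu := eigvals Y in spY EY *.
have mu0 k : 0 <= nth 0 mu k.
  case: (ltnP k (size mu)) => hk; last by rewrite nth_default.
  by apply: (eig_nonneg pY spY); rewrite mem_nth.
have [szm som _] := spY.
have mu_mono i j : (i <= j)%N -> (j < n)%N -> nth 0 mu j <= nth 0 mu i.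
  move=> ij jn.
  have := @sorted_leq_nth _ _ (@geR_trans R) (fun x => lexx x) 0 mu som i j.
  rewrite !inE szm => h; apply: h => //; exact: leq_ltn_trans jn.
apply: (@le_trans _ _ (cst + \sum_(i < s) gam i * nth 0 mu i)).
  rewrite /Phi -/mu /cst -big_split /=; apply ler_sum; move=> i _.
  have hi : (i < s)%N := ltn_ord i.
  have -> : gam i = (nth 0 lam i + t)^-1 by rewrite /gam hi.
  have := @ln_tangent R (nth 0 lam i) (nth 0 mu i) t.
  rewrite !ltr_wpDl ?nth_lam0 ?mu0 // => /(_ isT isT) h.
  apply: (le_trans h); rewrite le_eqVlt; apply/orP; left; apply/eqP; ring.
apply: (@le_trans _ _ (cst + \sum_(i < n) gam i * nth 0 mu i)).
  rewrite lerD2l (big_ord_widen _ (fun i => gam i * nth 0 mu i) hsn) /=.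
  rewrite [X in X <= _]big_mkcond /=; apply: ler_sum => i _.
  case: ifP => // _; by rewrite mulr_ge0 ?mu0 // ltW ?gam_pos.
rewrite /gfun /Gm EY tr_form lerD2l /=.
set P := V *m U^t*.
have Pu : P \is unitarymx.
  apply: mul_unitarymx; first exact: Vu.
  by rewrite trmxC_unitary.
pose Q (k l : 'I_n) := qc (P ((p^-1)%g k) ((r^-1)%g l)).
have -> : \sum_i \sum_j gam (p i) * qc (P i j) * nth 0 mu (r j) =
          \sum_(k < n) \sum_(l < n) gam k * Q k l * nth 0 mu l.
  rewrite [RHS](reindex_inj (@perm_inj _ p)); apply: eq_bigr => i _.
  rewrite [RHS](reindex_inj (@perm_inj _ r)); apply: eq_bigr => j _.
  by rewrite /Q !permK.
apply: (@rearr_ord R n gam (fun l => nth 0 mu l) Q).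
- exact: gam_mono.
- exact: mu_mono.
- by move=> k l; apply: qc_ge0.
- move=> k; rewrite -(qc_row ((p^-1)%g k) Pu).
  rewrite [RHS](reindex_inj (@perm_inj _ (r^-1)%g)); apply: eq_bigr => l _.
  by rewrite /Q.
- move=> l; rewrite -(qc_col ((r^-1)%g l) Pu).
  rewrite [RHS](reindex_inj (@perm_inj _ (p^-1)%g)); apply: eq_bigr => k _.
  by rewrite /Q.
Qed.

Lemma theta_nonneg :
  0 <= ((nth 0 lam s + t)^-1 - (nth 0 lam s.-1 + t)^-1) * \sum_(s <= i < n) nth 0 lam i.
Proof.
have hp k : 0 < nth 0 lam k + t by rewrite ltr_wpDl // nth_lam0.
apply: mulr_ge0; last by apply: sumr_ge0 => i _; apply: nth_lam0.
rewrite subr_ge0 lef_pV2 ?posrE // lerD2r.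
case: (ltnP s n) => hn; first by apply: lam_mono; lia.
rewrite (nth_default 0 (_ : size lam <= s)%N) ?szl // ; exact: nth_lam0.
Qed.

Lemma final_ineq :
  cst + \sum_(i < n) gam i * nth 0 lam i +
  ((nth 0 lam s + t)^-1 - (nth 0 lam s.-1 + t)^-1) * \sum_(s <= i < n) nth 0 lam i
  <= \sum_(i < n) ln (nth 0 lam i + t) - (n - s)%:R * ln t.
Proof.
have hp k : 0 < nth 0 lam k + t by rewrite ltr_wpDl // nth_lam0.
set gs := (nth 0 lam s + t)^-1; set b := (nth 0 lam s.-1 + t)^-1.
have Mk m (F : nat -> R) : \sum_(i < m) F i = \sum_(0 <= i < m) F i.
  by rewrite big_mkord.
rewrite /cst (Mk s (fun i => ln (nth 0 lam i + t) - nth 0 lam i * gam i)).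
rewrite (Mk n (fun i => gam i * nth 0 lam i)) (Mk n (fun i => ln (nth 0 lam i + t))).
rewrite !(@big_cat_nat _ _ _ s 0 n _ _ (leq0n s) hsn) /=.
have -> : \sum_(s <= i < n) gam i * nth 0 lam i = \sum_(s <= i < n) b * nth 0 lam i.
  apply: eq_big_nat => i /andP[hi _]; by rewrite /gam ltnNge hi.
have E1 : \sum_(0 <= i < s) (ln (nth 0 lam i + t) - nth 0 lam i * gam i) +
          \sum_(0 <= i < s) gam i * nth 0 lam i = \sum_(0 <= i < s) ln (nth 0 lam i + t).
  rewrite -big_split /=; apply: eq_bigr => i _; ring.
have -> : (n - s)%:R * ln t = \sum_(s <= i < n) ln t.
  by rewrite sumr_const_nat mulr_natl.
have E2 : \sum_(s <= i < n) b * nth 0 lam i + (gs - b) * \sum_(s <= i < n) nth 0 lam i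
          = \sum_(s <= i < n) gs * nth 0 lam i.
  rewrite !mulr_sumr -big_split /=; apply: eq_bigr => i _; ring.
have key : \sum_(s <= i < n) gs * nth 0 lam i <=
           \sum_(s <= i < n) (ln (nth 0 lam i + t) - ln t).
  apply: ler_sum_nat => i /andP[hi hin].
  apply: (@le_trans _ _ (nth 0 lam i / (nth 0 lam i + t))); last first.
    by apply: ln_lower => //; apply: nth_lam0.
  rewrite mulrC ler_wpM2l ?nth_lam0 // lef_pV2 ?posrE // lerD2r.
  by apply: lam_mono.
rewrite sumrB in key.
set S1 := \sum_(0 <= i < s) (ln _ - _) in E1 *.
set S2 := \sum_(0 <= i < s) gam i * _ in E1 *.
set S3 := \sum_(0 <= i < s) ln _ in E1 *.
set S4 := \sum_(s <= i < n) b * _ in E2 *.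
set S5 := \sum_(s <= i < n) nth 0 lam i in E2 *.
set S6 := \sum_(s <= i < n) gs * _ in E2 key *.
set S7 := \sum_(s <= i < n) ln (_ + t) in key *.
set S8 := \sum_(s <= i < n) ln t in key *.
have -> : S1 + (S2 + S4) + (gs - b) * S5 = S3 + S6 by rewrite -E1 -E2; ring.
lra.
Qed.
End Major.

Section Final.
Local Open Scope sesquilinear_scope.
Variable R : realType.
Local Notation C := (R[i]).

Lemma Mx_psd n (A : 'M[R]_n) (x : 'I_n -> R) : (forall i, 0 <= x i) -> psd (Mx A x).
Proof.
move=> x0; split.
  apply/matrixP => i j; rewrite /Mx mxE !summxE; apply: eq_bigr => k _.
  by rewrite !mxE; congr (_ * _); apply: eq_bigr => l _; rewrite !mxE mulrC.
move=> v; rewrite /Mx mulmx_sumr mulmx_suml summxE; apply: sumr_ge0 => k _.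
rewrite -scalemxAr -scalemxAl mxE; apply: mulr_ge0 => //.
set a := col k A.
have -> : v^T *m (a *m a^T) *m v = (a^T *m v)^T *m (a^T *m v).
  by rewrite trmx_mul trmxK !mulmxA.
by rewrite mxE big_ord1 mxE -expr2 sqr_ge0.
Qed.

Lemma det_shift n (M : 'M[R]_n) (V : 'M[C]_n) (d : 'I_n -> R) (t : R) :
  V \is unitarymx -> mC M = V^t* *m diag_mx (\row_i (d i)%:C%C) *m V ->
  \det (M + t%:M) = \prod_i (d i + t).
Proof.
move=> Vu E; apply: (@complexI R).
have -> : ((\det (M + t%:M))%:C)%C = \det (mC (M + t%:M)) by rewrite /mC det_map_mx.
have VV : V^t* *m V = 1%:M by rewrite -invmx_unitary // mulVmx // unitarymx_unit.
have -> : mC (M + t%:M) = invmx V *m diag_mx (\row_i (d i + t)%:C%C) *m V.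
  rewrite (invmx_unitary Vu).
  have -> : diag_mx (\row_i (d i + t)%:C%C) =
            diag_mx (\row_i (d i)%:C%C) + (t%:C%C)%:M :> 'M[C]_n.
    apply/matrixP => i j; rewrite !mxE; case: eqP => _ /=; last by rewrite !mulr0n addr0.
    by rewrite !mulr1n rmorphD.
  rewrite mulmxDr mulmxDl -E mul_mx_scalar -scalemxAl VV scalemx1.
  by rewrite /mC map_mxD map_scalar_mx.
rewrite (det_conj _ (unitarymx_unit Vu)) det_diag rmorph_prod; apply: eq_bigr => i _.
by rewrite mxE.
Qed.
End Final.

Unset Implicit Arguments.

Theorem theorem5 (R : realType) (n s : nat) (C A : 'M[R]_n) (xstar : 'I_n -> R) :
  (1 <= n)%N -> (1 <= s <= n)%N -> pd C ->
  cholesky_factor C (lambda_min C) A ->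
  feasible s xstar ->
  (forall x, feasible s x ->
     (Phi_hat s (lambda_min C) (Mx A x) <= Phi_hat s (lambda_min C) (Mx A xstar))%E) ->
  let t := lambda_min C in
  let lam := eigvals (Mx A xstar) in
  (* lam`_(i-1) = lambda*_i ; lam`_n = 0 = lambda*_{n+1} *)
  let Theta := ((nth 0 lam s + t)^-1 - (nth 0 lam s.-1 + t)^-1)
               * \sum_(s <= i < n) nth 0 lam i in
  (Theta%:E <= z_hat_D A s t - z_hat A s t)%E /\ 0 <= Theta.
Proof.
move=> n1 /andP[s1 sn] pdC _ fx opt t lam Theta.
have x0 : forall i, 0 <= xstar i by move=> i; case: fx => h _; case/andP: (h i).
have symC : C^T = C by case: pdC.
have [spC _] := spec2 symC.
have tpos : 0 < t.
  rewrite /t /lambda_min; have [szC _ _] := spC.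
  case E: (eigvals C) szC => [|a l'] szC; first by move: n1; rewrite -szC.
  by apply: (eig_pos pdC spC); rewrite E /= mem_last.
have psdM : psd (Mx A xstar) := Mx_psd A x0.
have symM : (Mx A xstar)^T = Mx A xstar by case: psdM.
have [spM [V [p [Vu EM]]]] := spec2 symM.
have lam0 : forall a, a \in lam -> 0 <= a by move=> a; apply: (eig_nonneg psdM spM).
have [szl sol _] := spM.
have thn : 0 <= Theta := theta_nonneg tpos s1 sn szl sol lam0 Vu.
split => //.
pose g := gfun s t lam V p.
have gM : g (Mx A xstar) = cst s t lam + \sum_(i < n) gam s t lam i * nth 0 lam i.
  exact: (gfun_at s t Vu EM).
have hPhi : (Phi_hat s t (Mx A xstar) <= (g (Mx A xstar))%:E)%E.
  rewrite /Phi_hat; apply: ereal_inf_lbound; exists g => //; split.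
    exact: gfun_concave.
  by move=> Y pY; apply: (gfun_major p tpos s1 sn szl sol lam0 Vu pY).
have zh : (z_hat A s t <= (g (Mx A xstar))%:E)%E.
  rewrite /z_hat; apply: ge_ereal_sup => _ [x fxx <-].
  by apply: le_trans hPhi; apply: opt.
set D := ln (\det (Mx A xstar + t%:M)).
have zD : (D%:E <= ereal_sup [set (ln (\det (Mx A x + t%:M)))%:E | x in feasible s])%E.
  by apply: ereal_sup_ubound; exists xstar.
have hD : D = \sum_(i < n) ln (nth 0 lam i + t).
  rewrite /D (det_shift t Vu EM) ln_prod; last first.
    by move=> i; rewrite ltr_wpDl // lam0 // mem_nth // szl.
  rewrite [RHS](reindex_inj (@perm_inj _ p)) //.
have fi := final_ineq tpos sn szl sol lam0.
set K := (n - s)%:R * ln t.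
rewrite /z_hat_D.
have H1 := leeB zD (lexx K%:E).
have H2 := leeB H1 zh.
apply: le_trans H2; rewrite -!EFinB lee_fin gM hD -/K.
rewrite /Theta; move: fi; rewrite -/K -/lam; lra.
Qed.
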